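(* The online correlated rental algorithm described in the context (Algorithm 1) is a $\frac{1}{32}$-OCR algorithm. That is, for every integer $d\ge1$, every fixed sequence of proposals $Q_1,\dots,Q_n$, every round $j$ and every offline vertex $i$, with $j'=\mathrm{prev}^i_j$, $$\Delta\mu^i_j \ge \begin{cases} 0 & i\notin Q_j,\\ p^i_j & i\in Q_j,\ |Q_j|=1,\\ p^i_j/2 & i\in Q_j,\ |Q_j|=2,\ j'\le j-d,\\ p^i_j/2+\frac{1}{32}\,(p^i_{j'}-\Delta\mu^i_{j'}) & i\in Q_j,\ |Q_j|=2,\ j'>j-d.\end{cases}$$ In particular, a $\frac{1}{32}$-OCR online algorithm exists.
   Context: Online correlated rental setting: there is a finite set $V$ of offline vertices and an integer $d\ge1$. A sequence $Q_1,\dots,Q_n$ of subsets of $V$, each of size $1$ or $2$, is fixed in advance and revealed online; at round $j$ the algorithm receives $Q_j$ and must select one vertex of $Q_j$. Round $j$ is deterministic if $|Q_j|=1$ and randomized if $|Q_j|=2$. An offline vertex $i$ is matched at round $j$ if it is selected at round $j$ and it was not matched at any round $t$ with $j-d<t<j$ (matching is built greedily in increasing time). Define $\Delta\mu^i_j=\Pr[i \text{ is matched at round } j]$ and $p^i_j=1-\sum_{t=\max\{1,j-d+1\}}^{j-1}\Delta\mu^i_t$ (the probability that $i$ is available at round $j$). $\mathrm{prev}^i_j$ is the largest $j'<j$ with $i\in Q_{j'}$, and $-\infty$ if none exists. An algorithm is $\gamma$-OCR ($0\le\gamma\le1$) if the displayed inequalities hold with $\frac1{32}$ replaced by $\gamma$.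 Algorithm 1: it keeps a state $\tau_{i,t}\in\{\mathrm{sel},\mathrm{nsel},\mathrm{unk}\}$ for every $i\in V$ and every round $t$, initially all $\mathrm{unk}$. All random draws are fresh and independent. ''Reset $i$'' at round $j$ means setting $\tau_{i,t}=\mathrm{unk}$ for all $t\in[j+1,j+d-1]$. (1) If $Q_j=\{i_1\}$: reset $i_1$ and select $i_1$. (2) If $Q_j=\{i_1,i_2\}$: with probability $1/2$ the round is a sender, and otherwise it is a receiver. - Sender: draw $\ell,m\in\{1,2\}$ independently and uniformly. Reset $i_{3-m}$. Set $\tau_{i_m,t}=\mathrm{sel}$ for all $t\in[j+1,j+d-1]$ if $\ell=m$, and $\tau_{i_m,t}=\mathrm{nsel}$ for those $t$ otherwise. Select $i_\ell$. - Receiver: draw $m\in\{1,2\}$ uniformly. If $\tau_{i_m,j}=\mathrm{sel}$, let $\ell=3-m$; if $\tau_{i_m,j}=\mathrm{nsel}$, let $\ell=m$; otherwise draw $\ell\in\{1,2\}$ uniformly. Reset $i_1$ and $i_2$. Select $i_\ell$. *)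

(* Defs.v *)
From HB Require Import structures.
From mathcomp Require Import all_boot all_order all_algebra.
Set Implicit Arguments. Unset Strict Implicit. Unset Printing Implicit Defensive.
Import Order.TTheory GRing.Theory Num.Theory.
Local Open Scope ring_scope.

(* Rounds are 0-indexed: round t of the paper is round t-1 here. *)

(* A proposal Q_j: either {i} (deterministic) or {i1,i2} (randomized, i1 <> i2). *)
Inductive proposal (V : Type) := One of V | Two of V & V.
Arguments One {V}. Arguments Two {V}.

Definition in_prop (V : eqType) (i : V) (q : proposal V) : bool :=
  match q with One a => a == i | Two a b => (a == i) || (b == i) end.

Inductive tstate := Sel | NSel | Unk.

Definition taus (V : Type) := V -> nat -> tstate.
Definition tau0 (V : Type) : taus V := fun (_ : V) (_ : nat) => Unk.

Definition setv (V : eqType) (d : nat) (tau : taus V) (i : V) (j : nat) (v : tstate)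
  : taus V :=
  fun i' t => if (i' == i) && (j.+1 <= t)%N && (t <= j + d - 1)%N then v else tau i' t.

Definition reset (V : eqType) (d : nat) (tau : taus V) (i : V) (j : nat) : taus V :=
  setv d tau i j Unk.

(* Fresh independent uniform random bits used at one round:
   (s, l, m, r) : s = "sender", l = the draw of ell (sender), m = the draw of m,
   r = the uniform draw of ell for a receiver when tau = unk.
   Index 1 is encoded by false, index 2 by true. *)
Definition coin := (bool * bool * bool * bool)%type.

Definition step (V : eqType) (d : nat) (tau : taus V) (j : nat) (q : proposal V)
  (c : coin) : taus V * V :=
  match q with
  | One i => (reset d tau i j, i)
  | Two i1 i2 =>
      let '(s, l, m, r) := c in
      let pick (b : bool) := if b then i2 else i1 in
      if s then
        let tau1 := reset d tau (pick (~~ m)) j in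
        (setv d tau1 (pick m) j (if l == m then Sel else NSel), pick l)
      else
        let lb := match tau (pick m) j with Sel => ~~ m | NSel => m | Unk => r end in
        (reset d (reset d tau i1 j) i2 j, pick lb)
  end.

Fixpoint sim (V : eqType) (d : nat) (Q : nat -> proposal V) (cs : nat -> coin)
  (k : nat) : taus V * seq V :=
  match k with
  | 0 => (@tau0 V, [::])
  | k'.+1 => let '(tau, s) := sim d Q cs k' in
             let '(tau', v) := step d tau k' (Q k') (cs k') in (tau', rcons s v)
  end.

Definition coins (n : nat) (w : {ffun 'I_n -> coin}) (t : nat) : coin :=
  if insub t is Some o then w o else (false, false, false, false).

Definition selected (V : eqType) (n d : nat) (Q : nat -> proposal V)
  (w : {ffun 'I_n -> coin}) (t : nat) : option V :=
  nth None (map Some (sim d Q (coins w) n).2) t.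

Fixpoint matched_list (V : finType) (d : nat) (sel : nat -> option V) (k : nat)
  : seq {ffun V -> bool} :=
  match k with
  | 0 => [::]
  | j.+1 => let ml := matched_list d sel j in
      rcons ml [ffun i => (sel j == Some i) &&
        all (fun t => ~~ (nth [ffun=> false] ml t i))
            [seq t <- iota 0 j | (j < t + d)%N]]
  end.

Definition matched (V : finType) (n d : nat) (Q : nat -> proposal V)
  (w : {ffun 'I_n -> coin}) (i : V) (j : nat) : bool :=
  nth [ffun=> false] (matched_list d (selected d Q w) j.+1) j i.

Definition dmu (V : finType) (n d : nat) (Q : nat -> proposal V) (i : V) (j : nat) : rat :=
  (#|[set w : {ffun 'I_n -> coin} | matched d Q w i j]|)%:R
  / (#|{: {ffun 'I_n -> coin}}|)%:R.

Definition pav (V : finType) (n d : nat) (Q : nat -> proposal V) (i : V) (j : nat) : rat :=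
  1 - \sum_((j.+1 - d)%N <= t < j) dmu n d Q i t.

(* prev^i_j : largest j' < j with i in Q_j', None for -infinity *)
Definition prev_round (V : finType) (Q : nat -> proposal V) (i : V) (j : nat) : option nat :=
  last None [seq Some t | t <- iota 0 j & in_prop i (Q t)].

(* Main.v *)
Require Import Defs.
From mathcomp Require Import all_boot all_order all_algebra.
From mathcomp Require Import zify.
From HB Require Import structures.
Import Order.TTheory GRing.Theory Num.Theory.
Set Implicit Arguments. Unset Strict Implicit. Unset Printing Implicit Defensive.

Definition ts_eqb (a b : tstate) :=
  match a, b with Sel, Sel | NSel, NSel | Unk, Unk => true | _, _ => false end.
Lemma ts_eqP : Equality.axiom ts_eqb.
Proof. by case; case; constructor. Qed.
HB.instance Definition _ := hasDecEq.Build tstate ts_eqP.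

Section Prev.
Variable V : finType.
Variable Q : nat -> proposal V.

Lemma prevS v k : prev_round Q v k.+1 =
  if in_prop v (Q k) then Some k else prev_round Q v k.
Proof.
rewrite /prev_round -addn1 iotaD add0n /= filter_cat map_cat /=.
case: (in_prop v (Q k)) => //=; first by rewrite last_cat.
by rewrite cats0.
Qed.

Lemma prevP v t r : prev_round Q v t = Some r ->
  [/\ (r < t)%N, in_prop v (Q r) & forall s, (r < s < t)%N -> ~~ in_prop v (Q s)].
Proof.
elim: t => [|t IH]; first by [].
rewrite prevS; case: ifP => H.
  case=> <-; split => // s; lia.
move=> /IH [H1 H2 H3]; split => //; first lia.
move=> s /andP[Hs1 Hs2]; case: (ltngtP s t) => Hst.
- by apply: H3; rewrite Hs1 Hst.
- lia.
- by rewrite Hst H.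
Qed.

Lemma prevN v t : prev_round Q v t = None -> forall s, (s < t)%N -> ~~ in_prop v (Q s).
Proof.
elim: t => [|t IH] //; rewrite prevS; case: ifP => H // /IH H' s Hs.
case: (ltngtP s t) => Hst; [exact: H'| lia | by rewrite Hst H].
Qed.

End Prev.

Section Part1.
Variable V : finType.
Variable d : nat.
Variable Q : nat -> proposal V.
Hypothesis d_gt0 : (0 < d)%N.

Definition pk (a b : V) (x : bool) := if x then b else a.

Definition wv (q : proposal V) (c : coin) (v : V) : tstate :=
  match q with
  | One _ => Unk
  | Two a b => let '(s, l, m, r) := c in
      if s && (pk a b m == v) then (if l == m then Sel else NSel) else Unk
  end.

Definition tauat (cs : nat -> coin) (v : V) (k t : nat) : tstate :=
  match prev_round Q v k with
  | Some r => if (t < r + d)%N then wv (Q r) (cs r) v else Unk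
  | None => Unk
  end.

Definition tauv cs v t := tauat cs v t t.

Definition selc (cs : nat -> coin) (t : nat) : V :=
  match Q t with
  | One a => a
  | Two a b => let '(s, l, m, r) := cs t in
      if s then pk a b l
      else pk a b (match tauv cs (pk a b m) t with Sel => ~~ m | NSel => m | Unk => r end)
  end.

Lemma step_fst tau k q c v t : (k < t)%N ->
  (step d tau k q c).1 v t =
  if in_prop v q && (t < k + d)%N then wv q c v else tau v t.
Proof.
move=> Hkt; have Ht : (t < k + d)%N = (t <= k + d - 1)%N by lia.
case: q => [a|a b] /=.
  rewrite /reset /setv Ht Hkt eq_sym andbT; case: (a == v) => //=.
case: c => [[[s l] m] r]; case: s => /=; rewrite /reset /setv /pk Ht Hkt /= !andbT;
  rewrite ![_ == v]eq_sym; case: (t <= _)%N; rewrite /= ?andbF ?andbT //;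
  case: m => /=; case Ea: (v == a); case Eb: (v == b) => //=.
Qed.

Lemma sim_fst cs k : forall v t, (k <= t)%N -> (sim d Q cs k).1 v t = tauat cs v k t.
Proof.
elim: k => [|k IH] v t Hkt; first by rewrite /tauat.
rewrite /=; case E: (sim d Q cs k) => [tau s].
have IH' : forall v t, (k <= t)%N -> tau v t = tauat cs v k t.
  by move=> v' t' H; rewrite -IH // E.
case E2: (step d tau k (Q k) (cs k)) => [tau' x] /=.
have := step_fst tau (Q k) (cs k) v Hkt; rewrite E2 /= => ->.
rewrite /tauat prevS; case: (in_prop v (Q k)) => /=.
  case: ifP => // Ht; rewrite IH' ?(ltnW Hkt) // /tauat.
  case P: prev_round => [r|] //; have [Hr _ _] := prevP P.
  by rewrite ifF //; lia.
by rewrite IH' ?(ltnW Hkt).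
Qed.

Lemma sim_snd cs k : (sim d Q cs k).2 = map (selc cs) (iota 0 k).
Proof.
elim: k => [|k IH] //.
have -> : iota 0 k.+1 = rcons (iota 0 k) k by rewrite -cats1 -addn1 iotaD.
rewrite map_rcons -IH /=.
have H1 := @sim_fst cs k.
case E: (sim d Q cs k) => [tau s] /=.
rewrite E /= in H1.
case E2: (step d tau k (Q k) (cs k)) => [tau' x] /=; congr rcons.
move: E2; rewrite /selc /step; case: (Q k) => [a|a b]; first by case.
case: (cs k) => [[[s0 l] m] r]; case: s0; first by case.
by rewrite H1 //; case.
Qed.
End Part1.

Section Part2.
Variable d : nat.
Hypothesis d_gt0 : (0 < d)%N.

Definition win (t : nat) := [seq s <- iota 0 t | (t < s + d)%N].

Lemma winE t : win t = index_iota (t.+1 - d) t.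
Proof.
rewrite /win /index_iota.
have Ha : (t.+1 - d <= t)%N by lia.
have -> : iota 0 t = iota 0 (t.+1 - d) ++ iota (t.+1 - d) (t - (t.+1 - d)).
  by rewrite -iotaD subnKC.
rewrite filter_cat.
rewrite (@eq_in_filter _ _ pred0); last first.
  by move=> s; rewrite mem_iota /= => H; apply/negbTE; lia.
rewrite filter_pred0 /=.
rewrite (@eq_in_filter _ _ predT) ?filter_predT //.
by move=> s; rewrite mem_iota /= => /andP[H _]; lia.
Qed.

Lemma mem_win t s : (s \in win t) = (s < t < s + d)%N.
Proof. by rewrite /win mem_filter mem_iota /= andbC; lia. Qed.

Fixpoint ml (x : nat -> bool) k : seq bool :=
  match k with
  | 0 => [::]
  | j.+1 => let l := ml x j in
      rcons l (x j && all (fun t => ~~ nth false l t) (win j))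
  end.

Definition mb x t := nth false (ml x t.+1) t.

Lemma size_ml x k : size (ml x k) = k.
Proof. by elim: k => //= k IH; rewrite size_rcons IH. Qed.

Lemma nth_ml x k t : (t < k)%N -> nth false (ml x k) t = mb x t.
Proof.
elim: k => // k IH Ht; rewrite /= nth_rcons size_ml.
case: (ltngtP t k) => H; first by rewrite IH.
  lia.
by rewrite H /mb /= nth_rcons size_ml ltnn eqxx.
Qed.

Lemma mbE x t : mb x t = x t && all (fun s => ~~ mb x s) (win t).
Proof.
rewrite {1}/mb /= nth_rcons size_ml ltnn eqxx; congr (_ && _).
apply: eq_in_all => s; rewrite mem_win => /andP[H _].
by rewrite nth_ml.
Qed.

Lemma ml_eq x y k : (forall s, (s < k)%N -> x s = y s) -> ml x k = ml y k.
Proof.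
elim: k => //= k IH H; rewrite IH ?H //.
by move=> s Hs; apply: H; lia.
Qed.

Lemma mb_eq x y t : (forall s, (s <= t)%N -> x s = y s) -> mb x t = mb y t.
Proof. by move=> H; rewrite /mb (@ml_eq x y t.+1). Qed.

Lemma mb_x x t : mb x t -> x t.
Proof. by rewrite mbE => /andP[]. Qed.

Lemma mb_disj x t1 t2 : mb x t1 -> mb x t2 -> (t1 < t2 < t1 + d)%N -> False.
Proof.
move=> H1 H2 Ht; move: H2; rewrite mbE => /andP[_ /allP /(_ t1)].
by rewrite mem_win Ht H1 => /(_ isT).
Qed.

Lemma mb_drop x y u j : (u < j)%N ->
  (forall s, (s < j)%N -> s != u -> x s = y s) ->
  ~~ mb x u -> ~~ y u ->
  forall t, (t < j)%N -> mb x t = mb y t.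
Proof.
move=> Huj Hxy Hmu Hyu t; elim/ltn_ind: t => t IH Htj.
case: (eqVneq t u) => [->|Htu].
  by rewrite (negbTE Hmu); apply/esym/negbTE; apply: contra Hyu; apply: mb_x.
rewrite !mbE Hxy //; congr (_ && _); apply: eq_in_all => s.
rewrite mem_win => /andP[Hs _]; rewrite IH //; lia.
Qed.

End Part2.

Lemma size_matched_list (V : finType) d (sel : nat -> option V) k :
  size (matched_list d sel k) = k.
Proof. by elim: k => //= k IH; rewrite size_rcons IH. Qed.

Lemma matched_list_ml (V : finType) d (sel : nat -> option V) (i : V) k :
  map (fun f : {ffun V -> bool} => f i) (matched_list d sel k) = ml d (fun s => sel s == Some i) k.
Proof.
elim: k => //= k IH; rewrite map_rcons IH ffunE; congr (rcons _ (_ && _)).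
apply: eq_in_all => t; rewrite mem_filter mem_iota => /andP[_ /andP[_ Ht]].
by rewrite -IH (nth_map [ffun=> false]) // size_matched_list.
Qed.

Lemma matchedE (V : finType) n d (Q : nat -> proposal V) (w : {ffun 'I_n -> coin}) (i : V) j : (0 < d)%N ->
  (j < n)%N ->
  matched d Q w i j = mb d (fun s => selc d Q (coins w) s == i) j.
Proof.
move=> Hd Hj; rewrite /matched -(nth_map _ false (fun f : {ffun V -> bool} => f i)); last first.
  by rewrite size_matched_list.
rewrite matched_list_ml; change (mb d (fun s => selected d Q w s == Some i) j = mb d (fun s => selc d Q (coins w) s == i) j).
apply: (mb_eq Hd) => s Hs.
rewrite /selected (sim_snd Q Hd) (nth_map i) ?size_map ?size_iota; last lia.
rewrite (nth_map 0%N) ?size_iota ?nth_iota //; exact: leq_ltn_trans Hs Hj.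
Qed.

Definition upd n (w : {ffun 'I_n -> coin}) (o : 'I_n) (c : coin) : {ffun 'I_n -> coin} :=
  [ffun o' => if o' == o then c else w o'].

Lemma coins_upd n (w : {ffun 'I_n -> coin}) o c t :
  coins (upd w o c) t = if t == val o then c else coins w t.
Proof.
rewrite /coins; case: insubP => [o' Ht <-|Ht].
  by rewrite ffunE.
case: eqP => // E; move: Ht; rewrite E ltn_ord //.
Qed.

Definition xo (a b : coin) : coin :=
  let '(a1, a2, a3, a4) := a in let '(b1, b2, b3, b4) := b in
  (addb a1 b1, addb a2 b2, addb a3 b3, addb a4 b4).

Lemma xoK a b : xo (xo a b) b = a.
Proof. by case: a => [[[a1 a2] a3] a4]; case: b => [[[b1 b2] b3] b4]; rewrite /= !addbK. Qed.

Lemma xoK' a b : xo a (xo a b) = b.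
Proof. by case: a => [[[a1 a2] a3] a4]; case: b => [[[b1 b2] b3] b4]; rewrite /= !addKb. Qed.

Lemma card_coin : #|{: coin}| = 16%N.
Proof. by rewrite !card_prod card_bool. Qed.

Lemma avg n (o : 'I_n) (h : {ffun 'I_n -> coin} -> nat) :
  (16 * \sum_w h w = \sum_w \sum_(c : coin) h (upd w o c))%N.
Proof.
have E1 : forall c, \sum_w h w = \sum_w h (upd w o (xo (w o) c)).
  move=> c; apply: reindex_inj => w1 w2 E.
  have : upd (upd w1 o (xo (w1 o) c)) o (xo (upd w1 o (xo (w1 o) c) o) c) =
         upd (upd w2 o (xo (w2 o) c)) o (xo (upd w2 o (xo (w2 o) c) o) c) by rewrite E.
  have K : forall w, upd (upd w o (xo (w o) c)) o (xo (upd w o (xo (w o) c) o) c) = w.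
    by move=> w; apply/ffunP => o'; rewrite !ffunE eqxx xoK; case: eqP => // ->.
  by rewrite !K.
have E2 : forall w, \sum_(c : coin) h (upd w o c) = \sum_(c : coin) h (upd w o (xo (w o) c)).
  move=> w; apply: reindex_inj => c1 c2 E.
  by rewrite -(xoK' (w o) c1) E xoK'.
rewrite (eq_bigr _ (fun w _ => E2 w)) exchange_big /=.
rewrite -(eq_bigr _ (fun c _ => E1 c)) sum_nat_const card_coin.
by [].
Qed.

Section Part4.
Variable V : finType.
Variables d n : nat.
Variable Q : nat -> proposal V.
Hypothesis d_gt0 : (0 < d)%N.

Definition sf (q : proposal V) (tau : V -> tstate) (c : coin) : V :=
  match q with
  | One a => a
  | Two a b => let '(s, l, m, r) := c in
      if s then pk a b l
      else pk a b (match tau (pk a b m) with Sel => ~~ m | NSel => m | Unk => r end)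
  end.

Lemma selcE cs t : selc d Q cs t = sf (Q t) (fun v => tauv d Q cs v t) (cs t).
Proof. by rewrite /selc /sf; case: (Q t) => // a b; case: (cs t) => [[[s l] m] r]. Qed.

Lemma sf_eq q tau tau' c : (forall v, in_prop v q -> tau v = tau' v) -> sf q tau c = sf q tau' c.
Proof.
case: q => //= a b H; case: c => [[[s l] m] r]; case: s => //.
by rewrite H // /pk; case: m; rewrite eqxx ?orbT.
Qed.

Lemma sf_in q tau c : in_prop (sf q tau c) q.
Proof.
case: q => /= [a|a b]; first by rewrite eqxx.
case: c => [[[s l] m] r]; case: s; rewrite /pk.
  by case: l; rewrite eqxx ?orbT.
by case: (match _ with Sel => _ | _ => _ end); rewrite eqxx ?orbT.
Qed.

Lemma selc_in cs t : in_prop (selc d Q cs t) (Q t).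
Proof. by rewrite selcE sf_in. Qed.

Lemma tauv_eq cs cs' v t : (forall s, (s < t)%N -> cs s = cs' s) ->
  tauv d Q cs v t = tauv d Q cs' v t.
Proof.
move=> H; rewrite /tauv /tauat; case P: prev_round => [r|] //.
by have [Hr _ _] := prevP P; rewrite H.
Qed.

Lemma selc_eq cs cs' t : (forall s, (s <= t)%N -> cs s = cs' s) ->
  selc d Q cs t = selc d Q cs' t.
Proof.
move=> H; rewrite !selcE H //; apply: sf_eq => v _.
by apply: tauv_eq => s Hs; apply: H; apply: ltnW.
Qed.

Definition flipl (c : coin) : coin := let '(s, l, m, r) := c in (s, ~~ l, m, r).
Definition flipst (x : tstate) := match x with Sel => NSel | NSel => Sel | Unk => Unk end.

Lemma wv_flip (q : proposal V) c (v : V) : wv q (flipl c) v = flipst (wv q c v).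
Proof.
case: q => //= a b; case: c => [[[s l] m] r] /=.
case: (s && _) => //; by case: l; case: m.
Qed.

Lemma wv_uniq (q : proposal V) c (v v' : V) : wv q c v != Unk -> wv q c v' != Unk -> v = v'.
Proof.
case: q => //= a b; case: c => [[[s l] m] r] /=.
case: s => //=; case E1: (pk a b m == v); case E2: (pk a b m == v') => //=.
by move: E1 E2 => /eqP <- /eqP.
Qed.

Lemma tauv_flip cs cs' r v t : (forall s, s != r -> cs' s = cs s) ->
  cs' r = flipl (cs r) ->
  tauv d Q cs' v t =
  (if prev_round Q v t == Some r then flipst else id) (tauv d Q cs v t).
Proof.
move=> H1 H2; rewrite /tauv /tauat; case P: prev_round => [r'|] //=.
case: eqP => [[->]|Hr]; first by rewrite H2 wv_flip; case: ifP.
by rewrite H1 //; apply/eqP => E; apply: Hr; rewrite E.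
Qed.

End Part4.

Lemma Av_eq d (Hd : (0 < d)%N) (x y : nat -> bool) j : (forall s, (s < j)%N -> x s = y s) ->
  all (fun t => ~~ mb d x t) (win d j) = all (fun t => ~~ mb d y t) (win d j).
Proof.
move=> H; apply: eq_in_all => t; rewrite (mem_win Hd) => /andP[Ht _].
rewrite (mb_eq Hd (y := y)) // => s Hs; apply: H; lia.
Qed.

Lemma Av_mono d (Hd : (0 < d)%N) (x y : nat -> bool) r j : (r < j < r + d)%N ->
  (forall s, (s < j)%N -> s != r -> x s = y s) -> (y r -> x r) ->
  all (fun t => ~~ mb d x t) (win d j) -> all (fun t => ~~ mb d y t) (win d j).
Proof.
move=> Hr Hxy Hyx HA.
case: (eqVneq (x r) (y r)) => E.
  rewrite -(Av_eq Hd (x := x)) // => s Hs.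
  by case: (eqVneq s r) => [->|]; [| apply: Hxy].
have Hxr : x r by move: E Hyx; case: (x r); case: (y r) => //= _ H; apply: H.
have Hyr : ~~ y r by move: E Hxr; case: (x r); case: (y r).
have Hmu : ~~ mb d x r by move/allP: HA; apply; rewrite (mem_win Hd).
have Hrj : (r < j)%N by case/andP: Hr.
have HH := mb_drop Hd Hrj Hxy Hmu Hyr.
move: HA; congr is_true; apply: eq_in_all => t; rewrite (mem_win Hd) => /andP[Ht _].
by rewrite HH.
Qed.

Lemma sum_pair (A B : finType) (F : A * B -> nat) :
  (\sum_p F p = \sum_a \sum_b F (a, b))%N.
Proof. by rewrite pair_bigA; apply: eq_bigr => -[]. Qed.

Lemma sum_coin (F : coin -> nat) :
  (\sum_c F c = \sum_(s : bool) \sum_(l : bool) \sum_(m : bool) \sum_(r : bool) F (s, l, m, r))%N.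
Proof.
rewrite sum_pair (sum_pair (fun x => \sum_r F (x, r))).
by rewrite (sum_pair (fun x => \sum_m \sum_r F (x, m, r))).
Qed.

Definition fw (x : tstate) : nat := match x with Sel => 0 | NSel => 4 | Unk => 2 end.
Definition gw (x : tstate) : nat := match x with Sel => 4 | NSel => 0 | Unk => 2 end.

Lemma sum_sf (V : finType) (a b i k : V) tau : a != b ->
  ((i == a) && (k == b)) || ((i == b) && (k == a)) ->
  (\sum_c (sf (Two a b) tau c == i : nat) = 4 + fw (tau i) + gw (tau k))%N.
Proof.
move=> Hab Hik; rewrite sum_coin !big_bool /= /pk.
have Hba : (b == a) = false by rewrite eq_sym; apply/negbTE.
case/orP: Hik => /andP[/eqP -> /eqP ->]; case: (tau a); case: (tau b);
  by rewrite /= ?eqxx ?Hba ?(negbTE Hab).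

Qed.

Lemma pk_eq (V : finType) (a b : V) (x y : bool) : a != b -> (pk a b x == pk a b y) = (x == y).
Proof.
move=> H; rewrite /pk; case: x; case: y; rewrite ?eqxx //=.
  by apply/negbTE; rewrite eq_sym.
by apply/negbTE.
Qed.

Lemma wv_sel (V : finType) (q : proposal V) c v : wv q c v != Unk ->
  exists a b l m rr, [/\ q = Two a b, c = (true, l, m, rr), pk a b m = v &
     wv q c v = if l == m then Sel else NSel].
Proof.
case: q => [a0|a b] /=; first by [].
case: c => [[[s l] m] r] /=; case: s => /=; last by [].
case E: (pk a b m == v) => //= _.
exists a, b, l, m, r; split => //.
by apply/eqP.
Qed.

Lemma coins_ord n (w : {ffun 'I_n -> coin}) (o : 'I_n) : coins w (val o) = w o.
Proof.
rewrite /coins; case: insubP => [o' _ E|]; last by rewrite ltn_ord.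
by congr (w _); apply: val_inj.
Qed.

Definition fl n (o : 'I_n) (w : {ffun 'I_n -> coin}) := upd w o (flipl (w o)).

Lemma flK n (o : 'I_n) : involutive (fl o).
Proof.
move=> w; apply/ffunP => o'; rewrite /fl /upd !ffunE eqxx.
have -> : flipl (flipl (w o)) = w o by case: (w o) => [[[??]?]?]; rewrite /= negbK.
by case: eqP => // ->.
Qed.

Lemma coins_fl n (o : 'I_n) w t : t != val o -> coins (fl o w) t = coins w t.
Proof. by move=> H; rewrite coins_upd (negbTE H). Qed.

Lemma coins_fl_o n (o : 'I_n) w : coins (fl o w) (val o) = flipl (coins w (val o)).
Proof. by rewrite coins_upd eqxx coins_ord. Qed.

Section Main.
Variable V : finType.
Variables d n : nat.
Variable Q : nat -> proposal V.
Hypothesis Hd : (0 < d)%N.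
Hypothesis Hdist : forall t i1 i2, (t < n)%N -> Q t = Two i1 i2 -> i1 <> i2.
Variable i : V.

Definition xs (w : {ffun 'I_n -> coin}) t := selc d Q (coins w) t == i.
Definition Av w j := all (fun t => ~~ mb d (xs w) t) (win d j).
Definition Mt w t := mb d (xs w) t.
Definition ti (w : {ffun 'I_n -> coin}) v j := tauv d Q (coins w) v j.

Lemma MtE w j : Mt w j = xs w j && Av w j.
Proof. by rewrite /Mt (mbE Hd). Qed.

Lemma xs_upd (o : 'I_n) c w t : (t < o)%N -> xs (upd w o c) t = xs w t.
Proof.
move=> Ht; rewrite /xs (@selc_eq _ _ _ _ (coins w)) // => s Hs.
by rewrite coins_upd ifF //; apply/negbTE; rewrite neq_ltn (leq_ltn_trans Hs Ht).
Qed.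

Lemma Av_upd (o : 'I_n) c w j : (j <= o)%N -> Av (upd w o c) j = Av w j.
Proof.
move=> Hj; apply: (Av_eq Hd) => s Hs; apply: xs_upd; exact: leq_trans Hs Hj.
Qed.

Lemma ti_upd (o : 'I_n) c w v j : (j <= o)%N -> ti (upd w o c) v j = ti w v j.
Proof.
move=> Hj; apply: tauv_eq => s Hs; rewrite coins_upd ifF //.
by apply/negbTE; rewrite neq_ltn (leq_trans Hs Hj).
Qed.

Lemma cntM j (Hj : (j < n)%N) a b k : Q j = Two a b ->
  ((i == a) && (k == b)) || ((i == b) && (k == a)) ->
  (16 * \sum_w Mt w j = \sum_w Av w j * (4 + fw (ti w i j) + gw (ti w k j)))%N.
Proof.
move=> HQ Hik; rewrite (avg (Ordinal Hj)); apply: eq_bigr => w _.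
have E : forall c, Mt (upd w (Ordinal Hj) c) j =
    (sf (Two a b) (fun v => ti w v j) c == i) && Av w j.
  move=> c; rewrite MtE (@Av_upd (Ordinal Hj) c w j (leqnn j)); congr (_ && _).
  rewrite /xs selcE coins_upd eqxx HQ; congr (_ == _); apply: sf_eq => v _.
  exact: (@ti_upd (Ordinal Hj) c w v j (leqnn j)).
under eq_bigr => c _ do rewrite E.
case: (Av w j); last by rewrite mul0n big1 // => c _; rewrite andbF.
rewrite mul1n; under eq_bigr => c _ do rewrite andbT.
by apply: sum_sf => //; apply/eqP; exact: (Hdist Hj HQ).
Qed.


Lemma sel_flip (o : 'I_n) w j z :
  (forall v, wv (Q o) (coins w o) v != Unk -> v = z) ->
  (forall t, (o < t < j)%N -> ~~ in_prop z (Q t)) ->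
  forall t, (t < j)%N -> t != o -> selc d Q (coins (fl o w)) t = selc d Q (coins w) t.
Proof.
move=> Hz Hzt t Htj Hto; rewrite !selcE coins_fl //; apply: sf_eq => v Hv.
rewrite (@tauv_flip _ _ _ (coins w) _ (val o)); last first.
- exact: coins_fl_o.
- by move=> s Hs; rewrite coins_fl.
case: eqP => [P|] //=; have [Hr Hvr _] := prevP P.
rewrite /tauv /tauat P; case: ifP => //= _.
case E: (wv (Q o) (coins w o) v) => //=; exfalso;
  (have Hvz : v = z by apply: Hz; rewrite E);
  by move: (Hzt t); rewrite Hr Htj -Hvz Hv => /(_ isT).
Qed.

Lemma ti_prev w v j r : prev_round Q v j = Some r -> (j < r + d)%N ->
  ti w v j = wv (Q r) (coins w r) v.
Proof. by move=> P H; rewrite /ti /tauv /tauat P H. Qed.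

Lemma ti_flip (o : 'I_n) w v j : prev_round Q v j = Some (val o) ->
  ti (fl o w) v j = flipst (ti w v j).
Proof.
move=> P; rewrite /ti (@tauv_flip _ _ _ (coins w) _ (val o)).
- by rewrite P eqxx.
- by move=> s Hs; rewrite coins_fl.
- exact: coins_fl_o.
Qed.

Lemma selc_r (w : {ffun 'I_n -> coin}) r a b l m rr : Q r = Two a b -> coins w r = (true, l, m, rr) ->
  selc d Q (coins w) r = pk a b l.
Proof. by move=> HQ Hc; rewrite selcE HQ Hc. Qed.


Lemma partG j (Hj : (j < n)%N) k : i != k ->
  (\sum_w (Av w j && (ti w k j == NSel)) <= \sum_w (Av w j && (ti w k j == Sel)))%N.
Proof.
move=> Hik.
case P: (prev_round Q k j) => [r|]; last first.
  by rewrite big1 // => w _; rewrite /ti /tauv /tauat P andbF.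
case: (ltnP j (r + d)) => Hrd; last first.
  by rewrite big1 // => w _; rewrite /ti /tauv /tauat P ltnNge Hrd andbF.
have [Hrj Hkr Hnk] := prevP P.
have Hrn : (r < n)%N by apply: ltn_trans Hrj Hj.
pose o := Ordinal Hrn.
have claim : forall u, Av u j -> ti u k j = NSel ->
    Av (fl o u) j && (ti (fl o u) k j == Sel).
  move=> u HA HN.
  have Hw : wv (Q r) (coins u r) k = NSel by rewrite -(ti_prev u P Hrd).
  have [a [b [l [m [rr [HQ Hc Hpk Hv]]]]]] : exists a b l m rr,
      [/\ Q r = Two a b, coins u r = (true, l, m, rr), pk a b m = k &
          wv (Q r) (coins u r) k = if l == m then Sel else NSel].
    by apply: wv_sel; rewrite Hw.
  have Hlm : l != m by move: Hv; rewrite Hw; case: (l == m).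
  apply/andP; split; last by rewrite (@ti_flip o u k j P) HN.
  apply: (@Av_mono _ Hd (xs u) (xs (fl o u)) r j); first by rewrite Hrj Hrd.
  - move=> s Hs Hsr; rewrite /xs (@sel_flip o u j k) //.
      move=> v Hv'; apply: (wv_uniq Hv'); by rewrite /= Hw.
  - rewrite /xs (@selc_r (fl o u) r a b (~~ l) m rr HQ); last first.
      by rewrite (coins_fl_o o u) /= Hc.
    have -> : ~~ l = m by move: Hlm; case: (l); case: (m).
    by rewrite Hpk eq_sym (negbTE Hik).
  - by [].
rewrite (reindex_inj (inv_inj (flK o))); apply: leq_sum => w _.
case E: (Av (fl o w) j && (ti (fl o w) k j == NSel)) => //.
move/andP: E => [HA /eqP HN]; have := claim _ HA HN; rewrite flK => ->.
by [].
Qed.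


Lemma partF j (Hj : (j < n)%N) j' : prev_round Q i j = Some j' -> (j < j' + d)%N ->
  (\sum_w (Av w j && (ti w i j == Sel)) + \sum_w (Av w j' && (ti w i j == NSel))
    <= \sum_w (Av w j && (ti w i j == NSel)))%N.
Proof.
move=> P Hrd.
have [Hrj Hir Hni] := prevP P.
have Hrn : (j' < n)%N by apply: ltn_trans Hrj Hj.
pose o := Ordinal Hrn.
have Hwin : (j' < j < j' + d)%N by rewrite Hrj Hrd.
have claimS : forall u, Av u j -> ti u i j = Sel ->
    (Av (fl o u) j && (ti (fl o u) i j == NSel)) && ~~ Av u j'.
  move=> u HA HS.
  have Hw : wv (Q j') (coins u j') i = Sel by rewrite -(ti_prev u P Hrd).
  have [a [b [l [m [rr [HQ Hc Hpk Hv]]]]]] : exists a b l m rr,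
      [/\ Q j' = Two a b, coins u j' = (true, l, m, rr), pk a b m = i &
          wv (Q j') (coins u j') i = if l == m then Sel else NSel].
    by apply: wv_sel; rewrite Hw.
  have Hlm : l = m by move: Hv; rewrite Hw; case: eqP.
  have Hx : xs u j' by rewrite /xs (selc_r HQ Hc) Hlm Hpk.
  apply/andP; split; last first.
    have : ~~ mb d (xs u) j' by move/allP: HA; apply; rewrite (mem_win Hd).
    by rewrite (mbE Hd) Hx.
  apply/andP; split; last by rewrite (@ti_flip o u i j P) HS.
  apply: (@Av_mono _ Hd (xs u) (xs (fl o u)) j' j) => //.
  move=> s Hs Hsr; rewrite /xs (@sel_flip o u j i) //.
  move=> v Hv'; apply: (wv_uniq Hv'); by rewrite /= Hw.
have claimU : forall w, Av w j' -> ti w i j = NSel -> Av w j.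
  move=> w HB HN.
  have Hw : wv (Q j') (coins w j') i = NSel by rewrite -(ti_prev w P Hrd).
  have [a [b [l [m [rr [HQ Hc Hpk Hv]]]]]] : exists a b l m rr,
      [/\ Q j' = Two a b, coins w j' = (true, l, m, rr), pk a b m = i &
          wv (Q j') (coins w j') i = if l == m then Sel else NSel].
    by apply: wv_sel; rewrite Hw.
  have Hlm : l != m by move: Hv; rewrite Hw; case: (l == m).
  have Hab : a != b by apply/eqP; exact: (Hdist Hrn HQ).
  have Hx : ~~ xs w j' by rewrite /xs (selc_r HQ Hc) -Hpk (pk_eq _ _ Hab).
  apply/allP => t; rewrite (mem_win Hd) => /andP[Htj Hjt].
  case: (ltngtP t j') => Ht.
  - by move/allP: HB; apply; rewrite (mem_win Hd) Ht /=; lia.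
  - have Hnt : ~~ in_prop i (Q t) by apply: Hni; rewrite Ht Htj.
    apply: contra Hnt => Hm.
    by move/(mb_x Hd): Hm; rewrite /xs => /eqP <-; apply: selc_in.
  - by rewrite Ht; apply: contra Hx; apply: (mb_x Hd).
have HBfl : forall w, Av (fl o w) j' = Av w j'.
  move=> w; apply: (Av_eq Hd) => s Hs; rewrite /xs; congr (_ == _).
  apply: selc_eq => s' Hs'; rewrite coins_fl //.
  by rewrite neq_ltn (leq_ltn_trans Hs' Hs).
rewrite (reindex_inj (inv_inj (flK o))) -big_split /=; apply: leq_sum => w _.
case E: (Av (fl o w) j && (ti (fl o w) i j == Sel)).
  move/andP: E => [HA /eqP HS]; have := claimS _ HA HS; rewrite flK HBfl.
  by case/andP => ->; move/negbTE => ->.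
rewrite add0n; case E2: (Av w j' && (ti w i j == NSel)) => //.
by move/andP: E2 => [HB /eqP HN]; rewrite (claimU _ HB HN) HN.
Qed.


Definition Ub j (w : {ffun 'I_n -> coin}) :=
  match prev_round Q i j with
  | Some j' => (j < j' + d)%N && Av w j' && (ti w i j == NSel)
  | None => false
  end.

Lemma base j (Hj : (j < n)%N) a b : Q j = Two a b -> in_prop i (Q j) ->
  (8 * \sum_w Av w j + 2 * \sum_w Ub j w <= 16 * \sum_w Mt w j)%N.
Proof.
move=> HQ Hi.
pose k := if i == a then b else a.
have Hab : a != b by apply/eqP; exact: (Hdist Hj HQ).
have Hik : ((i == a) && (k == b)) || ((i == b) && (k == a)).
  move: Hi; rewrite HQ /= => /orP[/eqP Ha|/eqP Hb].
    by rewrite /k -Ha !eqxx.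
  have Hba : (b == a) = false by rewrite eq_sym; apply/negbTE.
  by rewrite /k -Hb Hba !eqxx orbT.
have Hki : i != k.
  by move: Hik Hab; case/orP => /andP[/eqP -> /eqP ->] //; rewrite eq_sym.
rewrite (cntM Hj HQ Hik).
have E0 : (\sum_w Av w j * (4 + fw (ti w i j) + gw (ti w k j)) =
   4 * \sum_w Av w j + \sum_w Av w j * fw (ti w i j) + \sum_w Av w j * gw (ti w k j))%N.
  rewrite big_distrr -!big_split /=; apply: eq_bigr => w _; lia.
have E1 : (\sum_w Av w j * fw (ti w i j) + 2 * \sum_w (Av w j && (ti w i j == Sel)) =
   2 * \sum_w Av w j + 2 * \sum_w (Av w j && (ti w i j == NSel)))%N.
  rewrite !big_distrr -!big_split /=; apply: eq_bigr => w _.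
  by case: (Av w j); case: (ti w i j).
have E2 : (\sum_w Av w j * gw (ti w k j) + 2 * \sum_w (Av w j && (ti w k j == NSel)) =
   2 * \sum_w Av w j + 2 * \sum_w (Av w j && (ti w k j == Sel)))%N.
  rewrite !big_distrr -!big_split /=; apply: eq_bigr => w _.
  by case: (Av w j); case: (ti w k j).
have G := partG Hj Hki.
have F : (\sum_w (Av w j && (ti w i j == Sel)) + \sum_w Ub j w
    <= \sum_w (Av w j && (ti w i j == NSel)))%N.
  rewrite /Ub; case P: (prev_round Q i j) => [j'|]; last first.
    rewrite big1 ?addn0 ?big1 // => w _; by rewrite /ti /tauv /tauat P andbF.
  case: (ltnP j (j' + d)) => Hrd; last first.
    rewrite big1 ?addn0 ?big1 // => w _;
      by rewrite /ti /tauv /tauat P ltnNge Hrd ?andbF.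
  have := partF Hj P Hrd; congr (_ + _ <= _)%N.
rewrite E0; lia.
Qed.


Lemma countU j (Hj : (j < n)%N) j' a b : prev_round Q i j = Some j' -> (j < j' + d)%N ->
  Q j' = Two a b -> (8 * \sum_w Ub j w = \sum_w Av w j')%N.
Proof.
move=> P Hrd HQ.
have [Hrj Hir _] := prevP P.
have Hrn : (j' < n)%N by apply: ltn_trans Hrj Hj.
have Hab : a != b by apply/eqP; exact: (Hdist Hrn HQ).
apply/eqP; rewrite -(eqn_pmul2l (isT : (0 < 2)%N)) mulnA /=; apply/eqP.
rewrite (avg (Ordinal Hrn)) big_distrr /=; apply: eq_bigr => w _.
have E : forall c, Ub j (upd w (Ordinal Hrn) c) =
    Av w j' && (wv (Two a b) c i == NSel).
  move=> c; rewrite /Ub P Hrd /= (@Av_upd (Ordinal Hrn) c w j' (leqnn j')).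
  by rewrite (ti_prev _ P Hrd) coins_upd eqxx HQ.
under eq_bigr => c _ do rewrite E.
case: (Av w j'); last by rewrite big1.
rewrite sum_coin !big_bool /=.
have Hba : (b == a) = false by rewrite eq_sym; apply/negbTE.
by move: Hir; rewrite HQ /= => /orP[/eqP <-|/eqP <-]; rewrite /pk ?eqxx ?Hba ?(negbTE Hab).
Qed.
Lemma countOne j (Hj : (j < n)%N) : Q j = One i -> \sum_w Mt w j = \sum_w Av w j.
Proof.
move=> HQ; apply: eq_bigr => w _; rewrite MtE /xs selcE HQ /= eqxx.
by [].
Qed.

Lemma Av_sum w j : (Av w j + \sum_(j.+1 - d <= t < j) Mt w t = 1)%N.
Proof.
rewrite /Av (winE Hd).
case A: (all _ _).
  rewrite big1_seq // => t /andP[_ Ht]; move/allP: A => /(_ t Ht).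
  by rewrite /Mt => /negbTE ->.
have [t0 Ht0 Hm0] := allPn (negbT A); rewrite negbK in Hm0.
rewrite (bigD1_seq t0) ?iota_uniq //= /Mt Hm0 big1_seq // => t /andP[Htt0 Ht].
case Hm: (mb d (xs w) t) => //; exfalso.
move: Ht Ht0; rewrite !mem_index_iota => Ht Ht0.
case: (ltngtP t t0) => H.
- apply: (mb_disj Hd Hm Hm0); lia.
- apply: (mb_disj Hd Hm0 Hm); lia.
- by move: Htt0; rewrite H eqxx.
Qed.

End Main.

From mathcomp Require Import ring lra.

Lemma card_sum (T : finType) (P : pred T) : #|[set w | P w]| = (\sum_w (P w : nat))%N.
Proof.
rewrite -sum1_card big_mkcond /=; apply: eq_bigr => w _; rewrite inE.
by case: (P w).
Qed.

Lemma Npos n : (0 < #|{: {ffun 'I_n -> coin}}|)%N.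
Proof. by rewrite card_ffun card_coin expn_gt0. Qed.

Open Scope ring_scope.

Lemma R1 (a b N : nat) : (0 < N)%N -> (a <= 2 * b)%N ->
  a%:R / N%:R / 2 <= b%:R / N%:R :> rat.
Proof.
move=> HN Hab.
have H : a%:R <= 2 * b%:R :> rat by rewrite -natrM ler_nat.
have HN' : 0 < N%:R :> rat by rewrite ltr0n.
have -> : a%:R / N%:R / 2 = (a%:R / 2) * N%:R^-1 :> rat by rewrite mulrAC.
apply: ler_wpM2r; first by rewrite invr_ge0 ltW.
lra.
Qed.

Lemma R2 (a bb m m' N : nat) : (0 < N)%N -> (16 * a + bb <= 32 * m + m')%N ->
  a%:R / N%:R / 2 + 1 / 32 * (bb%:R / N%:R - m'%:R / N%:R) <= m%:R / N%:R :> rat.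
Proof.
move=> HN Hab.
have H : 16 * a%:R + bb%:R <= 32 * m%:R + m'%:R :> rat.
  by rewrite -!natrM -!natrD ler_nat.
have HN' : 0 < N%:R :> rat by rewrite ltr0n.
have -> : a%:R / N%:R / 2 + 1 / 32 * (bb%:R / N%:R - m'%:R / N%:R) =
   (a%:R / 2 + (bb%:R - m'%:R) / 32) * N%:R^-1 :> rat by ring.
apply: ler_wpM2r; first by rewrite invr_ge0 ltW.
lra.
Qed.

Lemma dmuE (V : finType) d n (Q : nat -> proposal V) (Hd : (0 < d)%N) i j : (j < n)%N ->
  dmu n d Q i j = (\sum_(w : {ffun 'I_n -> coin}) Mt d Q i w j)%:R
                  / (#|{: {ffun 'I_n -> coin}}|)%:R.
Proof.
move=> Hj; rewrite /dmu card_sum; congr (_%:R / _); apply: eq_bigr => w _.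
by rewrite (matchedE _ _ _ Hd Hj).
Qed.

Lemma pavE (V : finType) d n (Q : nat -> proposal V) (Hd : (0 < d)%N) i j : (j < n)%N ->
  pav n d Q i j = (\sum_(w : {ffun 'I_n -> coin}) Av d Q i w j)%:R
                  / (#|{: {ffun 'I_n -> coin}}|)%:R.
Proof.
move=> Hj; rewrite /pav.
set N := #|{: {ffun 'I_n -> coin}}|.
rewrite (@eq_big_nat _ _ _ _ _ _
   (fun t => (\sum_(w : {ffun 'I_n -> coin}) Mt d Q i w t)%:R / N%:R)); last first.
  move=> t /andP[_ Ht]; apply: dmuE => //; exact: ltn_trans Ht Hj.
rewrite -mulr_suml -natr_sum exchange_big /=.
have HS : (\sum_(w : {ffun 'I_n -> coin}) Av d Q i w j +
   \sum_(w : {ffun 'I_n -> coin}) \sum_(j.+1 - d <= t < j) Mt d Q i w t = N)%N.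
  rewrite -big_split /= (eq_bigr (fun _ => 1%N)); last by move=> w _; apply: Av_sum.
  by rewrite sum1_card.
have HN : (N%:R : rat) != 0 by rewrite pnatr_eq0 -lt0n Npos.
move: HN; rewrite -HS natrD.
move: (\sum_(w : {ffun 'I_n -> coin}) Av d Q i w j)%:R => A.
move: (\sum_(w : {ffun 'I_n -> coin}) \sum_(j.+1 - d <= t < j) Mt d Q i w t)%:R => S HN.
by field.
Qed.

Lemma ar0 (A M U : nat) : (8 * A + 2 * U <= 16 * M)%N -> (A <= 2 * M)%N.
Proof. lia. Qed.
Lemma ar1 (A M B : nat) : (A <= 2 * M)%N -> (16 * A + B <= 32 * M + B)%N.
Proof. lia. Qed.
Lemma ar2 (A M U B M' U' : nat) : (8 * A + 2 * U <= 16 * M)%N ->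
  (8 * B + 2 * U' <= 16 * M')%N -> (8 * U = B)%N -> (16 * A + B <= 32 * M + M')%N.
Proof. lia. Qed.

Unset Implicit Arguments.
Unset Strict Implicit.

Theorem mainTheorem2 (V : finType) (d n : nat) (Q : nat -> proposal V) :
  (0 < d)%N ->
  (forall t i1 i2, (t < n)%N -> Q t = Two i1 i2 -> i1 <> i2) ->
  forall (j : nat) (i : V), (j < n)%N ->
    (~~ in_prop i (Q j) -> 0 <= dmu n d Q i j) /\
    (Q j = One i -> pav n d Q i j <= dmu n d Q i j) /\
    (forall i1 i2, Q j = Two i1 i2 -> in_prop i (Q j) ->
       match prev_round Q i j with
       | Some j' =>
           if (j < j' + d)%N then
             pav n d Q i j / 2 + (1 / 32) * (pav n d Q i j' - dmu n d Q i j')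
               <= dmu n d Q i j
           else pav n d Q i j / 2 <= dmu n d Q i j
       | None => pav n d Q i j / 2 <= dmu n d Q i j
       end).
Proof.
move=> Hd Hdist j i Hj.
have HN := Npos n.
split; first by move=> _; rewrite /dmu divr_ge0 // ler0n.
split; first by move=> HQ; rewrite (pavE _ Hd _ Hj) (dmuE _ Hd _ Hj) (countOne Hd Hj HQ).
move=> a b HQ Hi.
have Hb := base Hd Hdist Hj HQ Hi.
rewrite (pavE _ Hd _ Hj) (dmuE _ Hd _ Hj).
have Hbase := ar0 Hb.
case P: (prev_round Q i j) => [j'|]; last by apply: R1.
case: ifP => Hrd; last by apply: R1.
have [Hrj Hir _] := prevP P.
have Hrn : (j' < n)%N by apply: ltn_trans Hrj Hj.
rewrite (pavE _ Hd _ Hrn) (dmuE _ Hd _ Hrn).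
apply: R2 => //.
case HQ': (Q j') => [a'|a' b'].
  have Ha' : a' = i by move: Hir; rewrite HQ' /= => /eqP.
  by rewrite Ha' in HQ'; rewrite (countOne Hd Hrn HQ'); apply: ar1.
have HU := countU Hd Hdist Hj P Hrd HQ'.
have Hb' := base Hd Hdist Hrn HQ' Hir.
exact: ar2 Hb Hb' HU.
Qed.
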